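(* Let $\mathcal{F}$ be a set of flows in the Clos network $C_{N,R}$. For all $i\in[R]$ and all positive integers $k$, the number of flows $f\in\mathcal{F}$ with $i(f)=i$ and $\mathrm{dem}(f)>\tfrac1k\cdot OPT(\mathcal{F})$ is at most $N(k-1)$. Similarly, for all $j\in[R]$ and all positive integers $l$, the number of flows $f\in\mathcal{F}$ with $j(f)=j$ and $\mathrm{dem}(f)>\tfrac1l\cdot OPT(\mathcal{F})$ is at most $N(l-1)$.
   Context: Clos network $C_{N,R}$: a directed graph with $N$ middle switches $M_1,\dots,M_N$, $R$ input switches $I_1,\dots,I_R$, $R$ output switches $O_1,\dots,O_R$, source servers $s_i^k$ and destination servers $t_i^k$ ($i\in[R]$, $k\in[N]$), and edges $s_i^kI_i$, $I_iM_m$, $M_mO_i$, $O_it_i^k$; all links have capacity $1$. A flow $f$ leaves input switch $I_{i(f)}$, enters output switch $O_{j(f)}$, and has positive demand $\mathrm{dem}(f)$; a set of flows has total demand at most $1$ leaving each source server and entering each destination server. A routing $r$ assigns each flow a single middle switch $r(f)\in[N]$; its congestion is $\max_{i\in[R],m\in[N]}\max\{\sum_{f:i(f)=i,r(f)=m}\mathrm{dem}(f),\ \sum_{f:j(f)=i,r(f)=m}\mathrm{dem}(f)\}$; $OPT(\mathcal{F})$ is the minimum congestion over all routings of $\mathcal{F}$. *)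

(* Defs.v *)
From HB Require Import structures.
From mathcomp Require Import all_boot all_order all_algebra.
Set Implicit Arguments. Unset Strict Implicit. Unset Printing Implicit Defensive.
Import Order.TTheory GRing.Theory Num.Theory.
Local Open Scope ring_scope.

(* Clos network C_{N,R}: input switches I_i, output switches O_i (i : 'I_R),
   middle switches M_m (m : 'I_N), source servers s_i^k and destination
   servers t_i^k (i : 'I_R, k : 'I_N).  A (finite) set of flows is a finType
   [F]; flow f starts at source server [src f] = (i, k), i.e. s_i^k, so it
   leaves input switch I_{i(f)} with i(f) = (src f).1, and ends at destination
   server [dst f] = (j, l), so it enters output switch O_{j(f)}, j(f) = (dst f).1. *)

Section Clos.
Variables (Rt : realFieldType) (N R : nat) (F : finType).
Variables (src dst : F -> 'I_R * 'I_N) (dem : F -> Rt).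

Definition iflow (f : F) : 'I_R := (src f).1.
Definition jflow (f : F) : 'I_R := (dst f).1.

Definition valid_flows : Prop :=
  (forall f, 0 < dem f) /\
  (forall s : 'I_R * 'I_N, \sum_(f | src f == s) dem f <= 1) /\
  (forall t : 'I_R * 'I_N, \sum_(f | dst f == t) dem f <= 1).

(* A routing assigns every flow a middle switch. *)
Definition routing := {ffun F -> 'I_N}.

Definition congestion (r : routing) : Rt :=
  \big[Num.max/0]_(i : 'I_R) \big[Num.max/0]_(m : 'I_N)
     Num.max (\sum_(f | (iflow f == i) && (r f == m)) dem f)
             (\sum_(f | (jflow f == i) && (r f == m)) dem f).

Definition is_OPT (opt : Rt) : Prop :=
  (exists r : routing, congestion r = opt) /\
  (forall r : routing, opt <= congestion r).
End Clos.

(* Main.v *)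
Require Import Defs.
From HB Require Import structures.
From mathcomp Require Import all_boot all_order all_algebra.
Import Order.TTheory GRing.Theory Num.Theory.
Local Open Scope ring_scope.

Lemma bigmax_ge (Rt : realFieldType) (I : finType) (G : I -> Rt) (x : I) :
  G x <= \big[Num.max/0]_(i : I) G i.
Proof.
rewrite unlock /reducebig.
have : x \in index_enum I by exact: mem_index_enum.
elim: (index_enum I) => //= a s IH; rewrite inE => /orP [/eqP ->|/IH H].
  by rewrite le_max lexx.
by rewrite le_max H orbT.
Qed.

Lemma bigmax_geP (Rt : realFieldType) (I : finType) (x : I) (G : I -> Rt) y :
  y <= G x -> y <= \big[Num.max/0]_(i : I) G i.
Proof. by move=> H; exact: (le_trans H (bigmax_ge _ _ G x)). Qed.

Lemma bigmax_ge0 (Rt : realFieldType) (I : finType) (G : I -> Rt) :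
  0 <= \big[Num.max/0]_(i : I) G i.
Proof.
by elim/big_rec: _ => // i x _ H; rewrite le_max H orbT.
Qed.

Lemma count_bound (Rt : realFieldType) (N R : nat) (F : finType)
  (g : F -> 'I_R) (r : F -> 'I_N) (dem : F -> Rt) (opt : Rt) :
  0 <= opt -> (forall f, 0 < dem f) ->
  (forall i m, \sum_(f | (g f == i) && (r f == m)) dem f <= opt) ->
  forall (i : 'I_R) (k : nat), (0 < k)%N ->
     (#|[set f : F | (g f == i) && (opt / k%:R < dem f)%R]| <= N * (k - 1))%N.
Proof.
move=> opt0 dpos load i k k0.
set S := [set f : F | _].
rewrite -sum1_card (partition_big r predT) //=.
have -> : (N * (k - 1) = \sum_(m : 'I_N) (k - 1))%N by rewrite sum_nat_const card_ord.
apply: leq_sum => m _.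
set A := [set f | (f \in S) && (r f == m)].
have -> : (\sum_(i0 in S | r i0 == m) 1 = #|A|)%N.
  by rewrite -sum1_card; apply: eq_bigl => f; rewrite !inE.
case: (leqP #|A| (k - 1)) => // HA; exfalso.
have kA : (k <= #|A|)%N by rewrite -(subnK k0) addn1.
have ne : has (fun f => f \in A) (index_enum F).
  apply/hasP; have : (0 < #|A|)%N by exact: leq_ltn_trans (leq0n _) HA.
  rewrite card_gt0 => /set0Pn [f fA].
  by exists f => //; exact: mem_index_enum.
have H1 : \sum_(f in A) (opt / k%:R) < \sum_(f in A) dem f.
  apply: (ltr_sum ne) => f; rewrite !inE => /andP [/andP [_ ->] _] //.
have H2 : \sum_(f in A) dem f <= opt.
  apply: le_trans (load i m).
  rewrite [X in _ <= X]big_mkcond [X in X <= _]big_mkcond /=.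
  apply: ler_sum => f _; rewrite !inE.
  case: (g f == i) => /=; case: (r f == m) => //=; rewrite ?andbF ?andbT //.
  by case: ifP => // _; exact: ltW.
move: (lt_le_trans H1 H2); rewrite sumr_const -[_ *+ #|A|]mulr_natr.
have kp : (0 : Rt) < k%:R by rewrite ltr0n.
have : k%:R <= (#|A|%:R : Rt) by rewrite ler_nat.
move=> kle.
have : opt <= opt / k%:R * #|A|%:R.
  apply: le_trans (ler_wpM2l _ kle); last by rewrite divr_ge0 // ltW.
  by rewrite divfK // gt_eqF.
move=> a b; by move: (lt_le_trans b a); rewrite ltxx.
Qed.

Theorem mainTheorem9 (Rt : realFieldType) (N R : nat) (F : finType)
    (src dst : F -> 'I_R * 'I_N) (dem : F -> Rt) (opt : Rt) :
  valid_flows src dst dem ->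
  is_OPT src dst dem opt ->
  (forall (i : 'I_R) (k : nat), (0 < k)%N ->
     (#|[set f : F | (iflow src f == i) && (opt / k%:R < dem f)%R]|
        <= N * (k - 1))%N) /\
  (forall (j : 'I_R) (l : nat), (0 < l)%N ->
     (#|[set f : F | (jflow dst f == j) && (opt / l%:R < dem f)%R]|
        <= N * (l - 1))%N).
Proof.
move=> [dpos _] [[r <-] _].
have c0 : 0 <= congestion src dst dem r by exact: bigmax_ge0.
split.
- apply: (@count_bound _ _ _ _ _ r) => // i m.
  rewrite /congestion; apply: (bigmax_geP _ _ i); apply: (bigmax_geP _ _ m).
  by rewrite le_max lexx.
- apply: (@count_bound _ _ _ _ _ r) => // i m.
  rewrite /congestion; apply: (bigmax_geP _ _ i); apply: (bigmax_geP _ _ m).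
  by rewrite le_max lexx orbT.
Qed.
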